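(* Let $L$ be a lattice with permutable congruences. Then $\operatorname{Con}_c L$ satisfies $\mathrm{URP}_1$ (that is, it satisfies $\mathrm{URP}_1$ at every one of its elements).
   Context: $\operatorname{Con}_c L$ denotes the $\{\vee,0\}$-semilattice of compact (i.e. finitely generated) congruences of a lattice $L$. A lattice has permutable congruences if $\alpha\beta=\beta\alpha$ for all congruences $\alpha,\beta$, where $\alpha\beta=\{(x,y): \exists z,\ (x,z)\in\alpha,\ (z,y)\in\beta\}$. Let $S$ be a $\{\vee,0\}$-semilattice and $\varepsilon\in S$. $S$ satisfies $\mathrm{URP}_1$ at $\varepsilon$ if for every family $((\alpha_i,\beta_i))_{i\in I}$ of elements of $S\times S$ with $\alpha_i\vee\beta_i=\varepsilon$ for all $i$, there exist a family $((\alpha_i^*,\beta_i^* ))_{i\in I}$ in $S\times S$ and a family $(\gamma_{i,j})_{(i,j)\in I\times I}$ in $S$ such that for all $i,j,k\in I$: (i) $\alpha_i^*\leq\alpha_i$, $\beta_i^*\leq\beta_i$, $\alpha_i^*\vee\beta_i^*=\varepsilon$; (ii) $\gamma_{i,j}\leq\alpha_i^*$ and $\gamma_{i,j}\leq\beta_j^*$; (iii) $\alpha_i^*\leq\alpha_j^*\vee\gamma_{i,j}$ and $\beta_j^*\leq\beta_i^*\vee\gamma_{i,j}$; (iv) $\gamma_{i,k}\leq\gamma_{i,j}\vee\gamma_{j,k}$. *)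

(* Defs.v *)
From mathcomp Require Import all_boot all_order.
Set Implicit Arguments. Unset Strict Implicit. Unset Printing Implicit Defensive.
Import Order.TTheory.
Local Open Scope order_scope.

Section Relations.
Variable T : Type.

Definition rel_le (R S : T -> T -> Prop) : Prop := forall x y, R x y -> S x y.
Definition rel_eq (R S : T -> T -> Prop) : Prop := forall x y, R x y <-> S x y.

Definition rel_comp (R S : T -> T -> Prop) : T -> T -> Prop :=
  fun x y => exists z, R x z /\ S z y.
End Relations.

Section Congruences.
Variables (d : Order.disp_t) (L : latticeType d).

Definition is_congruence (th : L -> L -> Prop) : Prop :=
  [/\ (forall x, th x x),
      (forall x y, th x y -> th y x),
      (forall x y z, th x y -> th y z -> th x z),
      (forall a b c e, th a b -> th c e -> th (a `&` c) (b `&` e))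
    & (forall a b c e, th a b -> th c e -> th (a `|` c) (b `|` e))].

Definition con_gen (R : L -> L -> Prop) : L -> L -> Prop :=
  fun x y => forall th, is_congruence th -> rel_le R th -> th x y.

Definition con_join (a b : L -> L -> Prop) : L -> L -> Prop :=
  con_gen (fun x y => a x y \/ b x y).

(* Compact (= finitely generated) congruences: the elements of Con_c L. *)
Definition compact_con (th : L -> L -> Prop) : Prop :=
  exists s : seq (L * L), rel_eq th (con_gen (fun x y => (x, y) \in s)).

Definition congruence_permutable : Prop :=
  forall a b : L -> L -> Prop, is_congruence a -> is_congruence b ->
    rel_eq (rel_comp a b) (rel_comp b a).
End Congruences.

(* URP_1 at eps for a {\/,0}-semilattice presented as the elements of X
   satisfying S, with order le, join, and equality eqX. *)
Definition URP1_at {X : Type} (S : X -> Prop) (le : X -> X -> Prop)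
    (join : X -> X -> X) (eqX : X -> X -> Prop) (eps : X) : Prop :=
  forall (I : Type) (a b : I -> X),
    (forall i, [/\ S (a i), S (b i) & eqX (join (a i) (b i)) eps]) ->
    exists (a' b' : I -> X) (g : I -> I -> X),
      (forall i, S (a' i) /\ S (b' i)) /\
      (forall i j, S (g i j)) /\
      (forall i, [/\ le (a' i) (a i), le (b' i) (b i)
                   & eqX (join (a' i) (b' i)) eps]) /\
      (forall i j, le (g i j) (a' i) /\ le (g i j) (b' j)) /\
      (forall i j, le (a' i) (join (a' j) (g i j)) /\
                   le (b' j) (join (b' i) (g i j))) /\
      (forall i j k, le (g i k) (join (g i j) (g j k))).

Definition ConcL_URP1 (d : Order.disp_t) (L : latticeType d) : Prop :=
  forall eps : L -> L -> Prop, compact_con eps ->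
    URP1_at (@compact_con d L) (@rel_le L) (@con_join d L) (@rel_eq L) eps.

(* Main.v *)
Require Import Defs.
From mathcomp Require Import all_boot all_order.
From Stdlib Require Import ClassicalEpsilon.
Import Order.TTheory.
Local Open Scope order_scope.

Lemma cong_eqv (d : Order.disp_t) (L : latticeType d) (th th' : L -> L -> Prop) :
  rel_eq th th' -> is_congruence th -> is_congruence th'.
Proof.
move=> E [r s t m j]; split.
- by move=> x; apply/E.
- by move=> x y /E H; apply/E; auto.
- by move=> x y z /E H1 /E H2; apply/E; eauto.
- by move=> a b c e /E H1 /E H2; apply/E; auto.
- by move=> a b c e /E H1 /E H2; apply/E; auto.
Qed.

Lemma con_gen_cong (d : Order.disp_t) (L : latticeType d) (R : L -> L -> Prop) :
  is_congruence (con_gen R).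
Proof.
split.
- by move=> x th [r _ _ _ _].
- by move=> x y H th Hth HR; case: (Hth) => _ s _ _ _; apply: s; apply: H.
- by move=> x y z H1 H2 th Hth HR; case: (Hth) => _ _ t _ _; apply: t (H1 _ _ _) (H2 _ _ _).
- by move=> a b c e H1 H2 th Hth HR; case: (Hth) => _ _ _ m _; apply: m (H1 _ _ _) (H2 _ _ _).
- by move=> a b c e H1 H2 th Hth HR; case: (Hth) => _ _ _ _ j; apply: j (H1 _ _ _) (H2 _ _ _).
Qed.

Lemma con_gen_incl (d : Order.disp_t) (L : latticeType d) (R : L -> L -> Prop) :
  rel_le R (con_gen R).
Proof. by move=> x y H th _ HR; apply: HR. Qed.

Lemma con_gen_min (d : Order.disp_t) (L : latticeType d) (R th : L -> L -> Prop) :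
  is_congruence th -> rel_le R th -> rel_le (con_gen R) th.
Proof. by move=> Hth HR x y H; apply: H. Qed.

Lemma compact_cong (d : Order.disp_t) (L : latticeType d) (th : L -> L -> Prop) :
  compact_con th -> is_congruence th.
Proof.
case=> s E; apply: (@cong_eqv _ _ (con_gen (fun x y => (x, y) \in s))).
  by move=> x y; split => /E.
exact: con_gen_cong.
Qed.

Definition gen (d : Order.disp_t) (L : latticeType d) (s : seq (L * L))
  (F : L * L -> L * L) : L -> L -> Prop :=
  fun x y => exists2 p, p \in s & (x, y) = F p.
Arguments gen {d L}.

Lemma compact_gen (d : Order.disp_t) (L : latticeType d) (s : seq (L * L)) F :
  compact_con (con_gen (gen s F)).
Proof.
exists (map F s) => x y; split => H th Hth HR; apply: H => // u v Huv; apply: HR.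
- by case: Huv => p ps ->; apply: map_f.
- by case/mapP: Huv => p ps E; exists p.
Qed.

Lemma cong_norm (d : Order.disp_t) (L : latticeType d) (th : L -> L -> Prop) :
  is_congruence th -> forall x y, th x y <-> th (x `&` y) (x `|` y).
Proof.
case=> r s t m j x y; split => H.
- have H1 : th x (x `&` y) by have := m _ _ _ _ (r x) H; rewrite meetxx.
  have H2 : th x (x `|` y) by have := j _ _ _ _ (r x) H; rewrite joinxx.
  by apply: t (s _ _ H1) H2.
- have H1 := m _ _ _ _ H (r x).
  have H2 := m _ _ _ _ H (r y).
  rewrite meetAC meetxx (meetC (x `|` y) x) joinKI in H1.
  rewrite -meetA meetxx (meetC (x `|` y) y) (joinC x y) joinKI in H2.
  by apply: t (s _ _ H1) H2.
Qed.

Lemma comp_cong (d : Order.disp_t) (L : latticeType d) (a b : L -> L -> Prop) :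
  congruence_permutable L -> is_congruence a -> is_congruence b ->
  is_congruence (rel_comp a b).
Proof.
move=> P Ha Hb; have PE := P _ _ Ha Hb.
case: (Ha) => ra sa ta ma ja; case: (Hb) => rb sb tb mb jb; split.
- by move=> x; exists x.
- move=> x y [z [H1 H2]]; apply/PE; exists z; split; auto.
- move=> x y w [c [H1 H2]] [e [H3 H4]].
  have : rel_comp b a c e by exists y.
  move/PE => [f [H5 H6]]; exists f; split; eauto.
- move=> p q c e [z [H1 H2]] [z' [H3 H4]]; exists (z `&` z'); split; auto.
- move=> p q c e [z [H1 H2]] [z' [H3 H4]]; exists (z `|` z'); split; auto.
Qed.

Arguments con_gen_cong {d L}.
Arguments cong_norm {d L th}.

Theorem theorem1p5 (d : Order.disp_t) (L : latticeType d) :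
  congruence_permutable L -> ConcL_URP1 L.
Proof.
move=> P eps [s Es] I a b Hab.
have Heps : is_congruence eps by apply: compact_cong; exists s.
have Ca i : is_congruence (a i) by case: (Hab i) => /compact_cong.
have Cb i : is_congruence (b i) by case: (Hab i) => _ /compact_cong.
pose u (p : L * L) := p.1 `&` p.2.
pose v (p : L * L) := p.1 `|` p.2.
have Ex : forall i (p : L * L), exists z : L,
    p \in s -> [/\ u p <= z, z <= v p, a i (u p) z & b i z (v p)].
  move=> i p; case: (boolP (p \in s)) => ps; last by exists (u p).
  have : eps p.1 p.2 by apply/Es; apply: con_gen_incl; case: p ps.
  move/(cong_norm Heps); case: (Hab i) => _ _ /(_ (u p) (v p)) [_ H] /H.
  have : rel_le (con_join (a i) (b i)) (rel_comp (a i) (b i)).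
    apply: con_gen_min; first exact: comp_cong.
    move=> x y [H1|H1]; [exists y | exists x]; split=> //.
    - by case: (Cb i).
    - by case: (Ca i).
  move=> Hle /Hle [c [H1 H2]]; exists ((c `|` u p) `&` v p) => _.
  case: (Ca i) => ra _ _ ma ja; case: (Cb i) => rb _ _ mb jb.
  have uv : u p <= v p by apply: le_trans (leIl _ _) (leUl _ _).
  split.
  - by rewrite lexI leUr uv.
  - exact: leIr.
  - have := ma _ _ _ _ (ja _ _ _ _ H1 (ra (u p))) (ra (v p)).
    by rewrite joinxx meet_l // joinC.
  - have := mb _ _ _ _ (jb _ _ _ _ H2 (rb (u p))) (rb (v p)).
    by rewrite (join_l (x := v p)) ?meetxx.
pose z i p := proj1_sig (constructive_indefinite_description _ (Ex i p)).
have Hz i p : p \in s -> [/\ u p <= z i p, z i p <= v p, a i (u p) (z i p) & b i (z i p) (v p)].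
  exact: (proj2_sig (constructive_indefinite_description _ (Ex i p))).
pose a' i := con_gen (gen s (fun p => (u p, z i p))).
pose b' i := con_gen (gen s (fun p => (z i p, v p))).
pose g i j := con_gen (gen s (fun p => (z j p, z i p `|` z j p))).
have Ja (A B : L -> L -> Prop) : rel_le A (con_join A B).
  by move=> x y H; apply: con_gen_incl; left.
have Jb (A B : L -> L -> Prop) : rel_le B (con_join A B).
  by move=> x y H; apply: con_gen_incl; right.
have Jc (A B : L -> L -> Prop) := con_gen_cong (fun x y => A x y \/ B x y).
have A'g i p : p \in s -> a' i (u p) (z i p).
  by move=> ps; apply: con_gen_incl; exists p.
have B'g i p : p \in s -> b' i (z i p) (v p).
  by move=> ps; apply: con_gen_incl; exists p.
have Gg i j p : p \in s -> g i j (z j p) (z i p `|` z j p).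
  by move=> ps; apply: con_gen_incl; exists p.
exists a', b', g; split; [|split; [|split; [|split; [|split]]]].
- by move=> i; split; apply: compact_gen.
- by move=> i j; apply: compact_gen.
- move=> i; have Hai : rel_le (a i) eps.
    by move=> x y H; case: (Hab i) => _ _ /(_ x y) [/(_ (Ja _ _ _ _ H))].
  have Hbi : rel_le (b i) eps.
    by move=> x y H; case: (Hab i) => _ _ /(_ x y) [/(_ (Jb _ _ _ _ H))].
  have Ha' : rel_le (a' i) (a i).
    by apply: con_gen_min => // x y [p ps [-> ->]]; case: (Hz i p ps).
  have Hb' : rel_le (b' i) (b i).
    by apply: con_gen_min => // x y [p ps [-> ->]]; case: (Hz i p ps).
  split => //.
  + move=> x y; split.
    * apply: con_gen_min => // x' y' [/Ha' H|/Hb' H].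
      - exact: Hai.
      - exact: Hbi.
    * move/Es; apply: con_gen_min ; first exact: Jc.
      move=> x' y' ps.
      case: (Jc (a' i) (b' i)) => _ _ t _ _.
      apply/(cong_norm (Jc (a' i) (b' i))).
      apply: t (Ja _ _ _ _ (A'g i (x', y') ps)) (Jb _ _ _ _ (B'g i (x', y') ps)).
- move=> i j; split.
  + apply: con_gen_min; first exact: con_gen_cong.
    move=> x y [p ps [-> ->]]; case: (Hz j p ps) => uz _ _ _.
    case: (con_gen_cong (gen s (fun p => (u p, z i p)))) => r _ _ _ jn.
    have := jn _ _ _ _ (A'g i p ps) (r (z j p)).
    by rewrite join_r.
  + apply: con_gen_min; first exact: con_gen_cong.
    move=> x y [p ps [-> ->]]; case: (Hz i p ps) => _ zv _ _.
    case: (con_gen_cong (gen s (fun p => (z j p, v p)))) => r sy t _ jn.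
    have := jn _ _ _ _ (B'g j p ps) (r (z i p)).
    rewrite (join_l zv) joinC => H; apply: t (B'g j p ps) (sy _ _ H).
- move=> i j; split.
  + apply: con_gen_min; first exact: Jc.
    move=> x y [p ps [-> ->]]; case: (Hz i p ps) => uz _ _ _.
    case: (Jc (a' j) (g i j)) => r sy t m _.
    have H := t _ _ _ (Ja _ _ _ _ (A'g j p ps)) (Jb _ _ _ _ (Gg i j p ps)).
    by have := m _ _ _ _ H (r (z i p)); rewrite (meet_l uz) (meetC _ (z i p)) joinKI.
  + apply: con_gen_min; first exact: Jc.
    move=> x y [p ps [-> ->]]; case: (Hz j p ps) => _ zv _ _.
    case: (Jc (b' i) (g i j)) => r sy t _ jn.
    have H := jn _ _ _ _ (Ja _ _ _ _ (B'g i p ps)) (r (z j p)).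
    rewrite (join_l zv) in H.
    exact: t (Jb _ _ _ _ (Gg i j p ps)) H.
- move=> i j k.
  apply: con_gen_min; first exact: Jc.
  move=> x y [p ps [-> ->]].
  case: (Jc (g i j) (g j k)) => r sy t _ jn.
  have H1 := Jb (g i j) _ _ _ (Gg j k p ps).
  have H2 := jn _ _ _ _ (Ja (g i j) (g j k) _ _ (Gg i j p ps)) (r (z k p)).
  have H3 := jn _ _ _ _ H1 (r (z i p)).
  rewrite -joinA in H2.
  rewrite (joinC (z k p) (z i p)) (joinC (z j p `|` z k p) (z i p)) in H3.
  exact: t (t _ _ _ H1 H2) (sy _ _ H3).
Qed.
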